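(* Let $\phi$ be a continuous flow on a compact metric space $X$, and let $Exp(\phi)$ be the set of uniformly-expansive points of $\phi$. Then $Exp(\phi)$ is invariant: $\phi^t(Exp(\phi))\subset Exp(\phi)$ for every $t\in\mathbb{R}$.
   Context: A continuous flow is a continuous map $\phi:\mathbb{R}\times X\to X$, $\phi^t(x)=\phi(t,x)$, with $\phi^0=\mathrm{id}$, $\phi^{t+s}=\phi^s\circ\phi^t$; $O(x)=\{\phi^t(x):t\in\mathbb{R}\}$. A reparametrization is an increasing homeomorphism $h:\mathbb{R}\to\mathbb{R}$ with $h(0)=0$. A point $x$ is uniformly-expansive if there is a neighborhood $U$ of $x$ such that for every $\varepsilon>0$ there is $\delta>0$ such that whenever $y,z\in U$ and some reparametrization $h$ satisfies $d(\phi^t(y),\phi^{h(t)}(z))<\delta$ for all $t\in\mathbb{R}$, then $y=\phi^s(w)$ with $w\in O(z)$ and $|s|<\varepsilon$. *)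

(* Defs.v *)
From Stdlib Require Import Reals List.
Open Scope R_scope.

Record is_metric {X : Type} (d : X -> X -> R) : Prop := {
  metric_nonneg : forall x y, 0 <= d x y;
  metric_eq0 : forall x y, d x y = 0 <-> x = y;
  metric_sym : forall x y, d x y = d y x;
  metric_triangle : forall x y z, d x z <= d x y + d y z }.

Definition mball {X : Type} (d : X -> X -> R) (x : X) (r : R) : X -> Prop :=
  fun y => d x y < r.

Definition metric_open {X : Type} (d : X -> X -> R) (U : X -> Prop) : Prop :=
  forall x, U x -> exists r, 0 < r /\ forall y, mball d x r y -> U y.

Definition metric_compact {X : Type} (d : X -> X -> R) : Prop :=
  forall (I : Type) (U : I -> X -> Prop),
    (forall i, metric_open d (U i)) ->
    (forall x, exists i, U i x) ->
    exists l : list I, forall x, exists i, In i l /\ U i x.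

Definition neighborhood {X : Type} (d : X -> X -> R) (x : X) (U : X -> Prop) : Prop :=
  exists V, metric_open d V /\ V x /\ forall y, V y -> U y.

(* continuous flow phi : R x X -> X, phi t x = phi^t(x); joint continuity
   w.r.t. the product topology of R x X *)
Definition continuous_flow {X : Type} (d : X -> X -> R) (phi : R -> X -> X) : Prop :=
  (forall t x eps, 0 < eps -> exists del, 0 < del /\
     forall s y, Rabs (s - t) < del -> d x y < del -> d (phi t x) (phi s y) < eps) /\
  (forall x, phi 0 x = x) /\
  (forall t s x, phi (t + s) x = phi s (phi t x)).

Definition orbit {X : Type} (phi : R -> X -> X) (x : X) : X -> Prop :=
  fun y => exists t, y = phi t x.

Definition reparametrization (h : R -> R) : Prop :=
  (forall a b, a < b -> h a < h b) /\
  continuity h /\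
  (forall y, exists a, h a = y) /\
  h 0 = 0.

Definition uniformly_expansive {X : Type} (d : X -> X -> R) (phi : R -> X -> X) (x : X) : Prop :=
  exists U, neighborhood d x U /\
    forall eps, 0 < eps -> exists del, 0 < del /\
      forall y z h, U y -> U z -> reparametrization h ->
        (forall t, d (phi t y) (phi (h t) z) < del) ->
        exists s w, orbit phi z w /\ Rabs s < eps /\ y = phi s w.

(* Main.v *)
Require Import Defs.
From Stdlib Require Import Reals List Lra.
Open Scope R_scope.

Lemma cont_map (X : Type) (d : X -> X -> R) (phi : R -> X -> X) :
  continuous_flow d phi -> forall t x eps, 0 < eps -> exists del, 0 < del /\
    forall y, d x y < del -> d (phi t x) (phi t y) < eps.
Proof.
  intros [Hc _] t x eps He.
  destruct (Hc t x eps He) as [del [Hd H]].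
  exists del; split; auto. intros y Hy. apply H; auto.
  rewrite Rminus_diag, Rabs_R0; auto.
Qed.

Lemma flow_inv (X : Type) (d : X -> X -> R) (phi : R -> X -> X) :
  continuous_flow d phi -> forall t x, phi (-t) (phi t x) = x.
Proof.
  intros [_ [H0 H1]] t x. rewrite <- H1. replace (t + - t) with 0 by ring. auto.
Qed.

Definition fmin (X : Type) (l : list {p : X & {del : R | 0 < del}}) : R :=
  fold_right (fun i acc => Rmin (proj1_sig (projT2 i) / 2) acc) 1 l.

Lemma fmin_pos X l : 0 < fmin X l.
Proof.
  induction l as [|i l IH]; simpl. lra.
  destruct i as [p [del Hd]]; simpl. apply Rmin_glb_lt; lra.
Qed.

Lemma fmin_le X l i : In i l -> fmin X l <= proj1_sig (projT2 i) / 2.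
Proof.
  induction l as [|j l IH]; simpl. tauto.
  intros [->|Hi]. apply Rmin_l.
  eapply Rle_trans. apply Rmin_r. auto.
Qed.

Lemma unif (X : Type) (d : X -> X -> R) (phi : R -> X -> X) :
  is_metric d -> metric_compact d -> continuous_flow d phi ->
  forall t eps, 0 < eps -> exists del, 0 < del /\
    forall a b, d a b < del -> d (phi t a) (phi t b) < eps.
Proof.
  intros Hm Hk Hf t eps He.
  set (I := {p : X & {del : R | 0 < del /\
      forall y, d p y < del -> d (phi t p) (phi t y) < eps / 2}}).
  set (U := fun (i : I) => mball d (projT1 i) (proj1_sig (projT2 i) / 2)).
  destruct (Hk I U) as [l Hl].
  - intros [p [del [Hd Hp]]] x Hx. unfold U, mball in *; simpl in *.
    exists (del / 2 - d p x). split. lra.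
    intros y Hy. pose proof (metric_triangle d Hm p x y). lra.
  - intros x. destruct (cont_map X d phi Hf t x (eps/2)) as [del [Hd Hp]]. lra.
    exists (existT _ x (exist _ del (conj Hd Hp))). unfold U, mball; simpl.
    rewrite (proj2 (metric_eq0 d Hm x x) eq_refl). lra.
  - set (l' := map (fun i : I => existT (fun _ : X => {del : R | 0 < del}) (projT1 i)
                  (exist (fun del => 0 < del) (proj1_sig (projT2 i)) (proj1 (proj2_sig (projT2 i))))) l).
    exists (fmin X l'). split. apply fmin_pos.
    intros a b Hab. destruct (Hl a) as [[p [del [Hd Hp]]] [Hin Ha]].
    unfold U, mball in Ha; simpl in Ha.
    pose proof (fmin_le X l' _ (in_map _ _ _ Hin)) as Hle. simpl in Hle.
    pose proof (metric_triangle d Hm p a b).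
    assert (H1 := Hp a ltac:(lra)). assert (H2 := Hp b ltac:(lra)).
    pose proof (metric_triangle d Hm (phi t a) (phi t p) (phi t b)).
    rewrite (metric_sym d Hm (phi t a) (phi t p)) in *. lra.
Qed.

Theorem mainTheorem4 (X : Type) (d : X -> X -> R) (phi : R -> X -> X) :
  is_metric d -> metric_compact d -> continuous_flow d phi ->
  forall (t : R) (x : X), uniformly_expansive d phi x ->
    uniformly_expansive d phi (phi t x).
Proof.
  intros Hm Hk Hf t x [U [[V [HVo [HVx HVU]]] HU]].
  assert (Hinv := flow_inv X d phi Hf).
  assert (Hinv' : forall y, phi t (phi (-t) y) = y).
  { intros y. pose proof (Hinv (-t) y) as E. rewrite Ropp_involutive in E. exact E. }
  destruct Hf as [Hc [H0 H1]] eqn:Hfe.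
  exists (fun y => U (phi (-t) y)). split.
  - exists (fun y => V (phi (-t) y)). split; [|split].
    + intros y Hy. destruct (HVo _ Hy) as [r [Hr Hb]].
      destruct (cont_map X d phi Hf (-t) y r Hr) as [del [Hd Hp]].
      exists del. split; auto. intros q Hq. apply Hb. apply Hp. exact Hq.
    + rewrite Hinv. exact HVx.
    + intros y Hy. apply HVU. exact Hy.
  - intros eps He. destruct (HU eps He) as [del [Hd Hdel]].
    destruct (unif X d phi Hm Hk Hf (-t) del Hd) as [del' [Hd' Hu]].
    exists del'. split; auto.
    intros y z h Hy Hz Hh Hclose.
    destruct (Hdel (phi (-t) y) (phi (-t) z) h Hy Hz Hh) as [s [w [[r Hw] [Hs Hyw]]]].
    { intros u. rewrite <- !H1. rewrite !(Rplus_comm (-t)). rewrite !H1. apply Hu. apply Hclose. }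
    exists s, (phi t w). split; [|split; auto].
    + exists (-t + (r + t)). rewrite H1, Hw, <- H1. f_equal; ring.
    + rewrite <- (Hinv' y), Hyw, <- !H1. f_equal; ring.
Qed.
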